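(* Assume the setting and notation described in the context, with $1\le p<s\le d$, $\omega>0$, and with the following nondegeneracy conditions: - $\mathbf A_R(\omega)$ is invertible; - $\mathbf A_V(\omega)$ is invertible if $s<d$; - $a_{s,s}(\omega)\ne0$; - $\mathbf a_R^{\mathrm T}(\omega)\mathbf A_R^{-1}(\omega)\mathbf D_a\neq0$. Let $\vec f_d,\vec f_a\in\mathbb C$ and $\vec{\mathbf x}\in\mathbb C^d$ satisfy $\mathbf A(\omega)\vec{\mathbf x}=\mathbf B_d\vec f_d+\mathbf B_a\vec f_a$ and $\vec x_s=0$, where $\vec f_a$ is an arbitrary absorber force phasor, produced by any absorber and any control law. Then, for every link $i=1,\dots,d+1$, the maximal elastic potential energy $W_{i,\max}=\tfrac12k_i|\vec x_i-\vec x_{i-1}|^2$ (with $\vec x_0=\vec x_{d+1}=0$) is a function only of: - the frequency $\omega$; - the disturbance amplitude $|\vec f_d|$; - the structural parameters $\{m_i: 1\le i\le d,\ i\ne s\}$ and $\{k_i,c_i: 1\le i\le d+1\}$. In particular, these maximal energies do not depend on the parameters (mass, stiffness, damping) of the absorber or on the control law generating $\vec f_a$. Hence they cannot be modified by the absorber design or its control, but only by changing the structural parameters of the chain.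
   Context: A chain of $d\ge 2$ masses $m_1,\dots,m_d>0$ is considered. For $1\le i\le d+1$, link $i$ connects mass $i-1$ and mass $i$ through a spring $k_i>0$ and a damper $c_i\ge0$, where ''mass $0$'' and ''mass $d+1$'' denote the fixed base. - $\mathbf M=\mathrm{diag}(m_1,\dots,m_d)$. - $\mathbf K$ is tridiagonal with $K_{ii}=k_i+k_{i+1}$ and $K_{i,i+1}=K_{i+1,i}=-k_{i+1}$; all other entries are zero. - $\mathbf C$ is defined likewise with the $c_i$. - $\mathbf A(\omega)=-\omega^2\mathbf M+\jmath\omega\mathbf C+\mathbf K$ for a fixed $\omega>0$. Steady-state phasors satisfy $\mathbf A(\omega)\vec{\mathbf x}=\mathbf B_d\vec f_d+\mathbf B_a\vec f_a$, where $\mathbf B_d=\mathbf e_d$ and $\mathbf B_a=\mathbf e_p$ are standard unit vectors of $\mathbb C^d$. Here $\vec f_d$ is the disturbance force phasor acting on $m_d$, and $\vec f_a$ is the total force in the link of an active absorber mounted on $m_p$. With $1\le p<s\le d$, the block decomposition of $\mathbf A(\omega)$ according to indices $\{1,\dots,s-1\}$, $\{s\}$, $\{s+1,\dots,d\}$ is $$\mathbf A=\begin{bmatrix}\mathbf A_R&\mathbf a_R&\mathbf 0\\ \mathbf a_R^{\mathrm T}&a_{s,s}&\mathbf a_V^{\mathrm T}\\ \mathbf 0&\mathbf a_V&\mathbf A_V\end{bmatrix},$$ where: - $\mathbf a_R=(0,\dots,0,-k_s-\jmath\omega c_s)^{\mathrm T}\in\mathbb C^{s-1}$; - $\mathbf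 a_V=(-k_{s+1}-\jmath\omega c_{s+1},0,\dots,0)^{\mathrm T}\in\mathbb C^{d-s}$; - $a_{s,s}=-\omega^2m_s+k_s+k_{s+1}+\jmath\omega(c_s+c_{s+1})$. $\mathbf D_a\in\mathbb R^{s-1}$ is the $p$-th standard unit vector, and $\mathbf D_d\in\mathbb R^{d-s}$ is the last standard unit vector. $W_{i,\max}=\tfrac12k_i|\vec x_i-\vec x_{i-1}|^2$ is the maximum over $t$ of the elastic energy $\tfrac12k_i(x_i(t)-x_{i-1}(t))^2$ in link $i$, where $x_i(t)=\Re(\vec x_ie^{\jmath\omega t})$. *)

(* Defs.v *)
From HB Require Import structures.
From mathcomp Require Import all_boot all_order all_algebra.
From mathcomp Require Import complex.
Set Implicit Arguments. Unset Strict Implicit. Unset Printing Implicit Defensive.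
Import Order.TTheory GRing.Theory Num.Theory.
Local Open Scope ring_scope.
Local Open Scope complex_scope.

Section Chain.
Variable R : rcfType.
Local Notation C := R[i].

Definition cmod (z : C) : R := let: a +i* b := z in Num.sqrt (a ^+ 2 + b ^+ 2).

(* Physical indexing: masses m i (1 <= i <= d), links k i, c i (1 <= i <= d+1),
   given as functions nat -> R; matrix row/column r (0-based) is mass r+1. *)
Variables (d : nat) (w : R) (m k c : nat -> R).

Definition Mmx : 'M[C]_d :=
  \matrix_(r, q) (if r == q :> nat then (m r.+1)%:C else 0).
Definition tridiag (l : nat -> R) : 'M[C]_d :=
  \matrix_(r, q)
    (if r == q :> nat then (l r.+1 + l r.+2)%:C
     else if q == r.+1 :> nat then (- l r.+2)%:C
     else if r == q.+1 :> nat then (- l q.+2)%:C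
     else 0).
Definition Kmx : 'M[C]_d := tridiag k.
Definition Cmx : 'M[C]_d := tridiag c.

Definition Amx : 'M[C]_d := - (w ^+ 2)%:C *: Mmx + (w *i) *: Cmx + Kmx.

(* entries of A by 0-based nat indices (0 outside the range) *)
Definition Aent (r q : nat) : C :=
  match (insub r : option 'I_d), (insub q : option 'I_d) with
  | Some r', Some q' => Amx r' q'
  | _, _ => 0
  end.

Variables (p s : nat).
(* blocks for the index sets {1..s-1}, {s}, {s+1..d} *)
Definition A_R : 'M[C]_(s.-1) := \matrix_(r, q) Aent r q.
Definition A_V : 'M[C]_(d - s) := \matrix_(r, q) Aent (s + r) (s + q).
Definition a_R : 'cV[C]_(s.-1) :=
  \col_r (if r == (s.-1).-1 :> nat then - ((k s)%:C + (w * c s) *i) else 0).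
Definition a_ss : C := (- (w ^+ 2 * m s) + k s + k s.+1)%:C + (w * (c s + c s.+1)) *i.
Definition D_a : 'cV[C]_(s.-1) := \col_r (r == p.-1 :> nat)%:R.
Definition D_d : 'cV[C]_(d - s) := \col_r (r == (d - s).-1 :> nat)%:R.
Definition B_d : 'cV[C]_d := \col_r (r == d.-1 :> nat)%:R.
Definition B_a : 'cV[C]_d := \col_r (r == p.-1 :> nat)%:R.

Definition chain_nondeg : Prop :=
  [/\ A_R \in unitmx,
      (s < d)%N -> A_V \in unitmx,
      a_ss != 0 &
      ((a_R^T *m invmx A_R *m D_a) ord0 ord0 != 0)].

(* phasor of mass i (physical index), with x_0 = x_{d+1} = 0 *)
Definition xph (x : 'cV[C]_d) (i : nat) : C :=
  if i is i'.+1 then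
    match (insub i' : option 'I_d) with Some o => x o ord0 | None => 0 end
  else 0.

Definition Wmax (x : 'cV[C]_d) (i : nat) : R :=
  (1 / 2) * k i * (cmod (xph x i - xph x i.-1)) ^+ 2.
End Chain.

(* Main.v *)
Require Import Defs.
From HB Require Import structures.
From mathcomp Require Import all_boot all_order all_algebra.
From mathcomp Require Import complex zify ring lra.
Import Order.TTheory GRing.Theory Num.Theory.
Local Open Scope ring_scope.
Section S.
Local Open Scope complex_scope.
Variable R : rcfType.
Variables (d : nat) (w : R) (m k c : nat -> R) (p s : nat).
Lemma Aent_far r q : (r.+2 <= q \/ q.+2 <= r)%N -> Aent d w m k c r q = 0.
Proof.
move=> H; rewrite /Aent.
case: insubP => [r' _ Er|] //; case: insubP => [q' _ Eq|] //.
have {}Er : nat_of_ord r' = r := Er. have {}Eq : nat_of_ord q' = q := Eq.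
rewrite /Amx /Kmx /Cmx /Mmx /tridiag !mxE.
have h1 : (r' == q' :> nat) = false by apply/negbTE/eqP; lia.
have h2 : (q' == r'.+1 :> nat) = false by apply/negbTE/eqP; lia.
have h3 : (r' == q'.+1 :> nat) = false by apply/negbTE/eqP; lia.
by rewrite h1 h2 h3 !(mulr0, addr0).
Qed.
Lemma aR_ent (hs : (2 <= s)%N) (hsd : (s <= d)%N) (h : (s.-1.-1 < s.-1)%N) :
  a_R w k c s (Ordinal h) ord0 = Aent d w m k c s.-1 s.-1.-1.
Proof.
rewrite /a_R /Aent mxE eqxx.
have h1 : (s.-1 < d)%N by lia.
have h2 : (s.-1.-1 < d)%N by lia.
case: insubP => [r' _ Er|]; last by rewrite h1.
case: insubP => [q' _ Eq|]; last by rewrite h2.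
have {}Er : nat_of_ord r' = s.-1 := Er. have {}Eq : nat_of_ord q' = s.-2 := Eq.
rewrite /Amx /Kmx /Cmx /Mmx /tridiag !mxE /= Er Eq.
have e1 : (s.-1 == s.-2 :> nat) = false by apply/negbTE/eqP; lia.
have e2 : (s.-2 == s.-1.+1 :> nat) = false by apply/negbTE/eqP; lia.
have e3 : (s.-1 == s.-2.+1 :> nat) by apply/eqP; lia.
have e4 : s.-2.+2 = s by lia.
rewrite e1 e2 e3 e4.
apply/eqP; rewrite eq_complex /=; by apply/andP; split; apply/eqP; ring.
Qed.

Definition zn (z : 'cV[R[i]]_d) (j : nat) : R[i] :=
  match (insub j : option 'I_d) with Some o => z o ord0 | None => 0 end.

Lemma zn_out (z : 'cV[R[i]]_d) j : (d <= j)%N -> zn z j = 0.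
Proof.
move=> h; rewrite /zn; case: insubP => [o _ Eo|] //.
have {}Eo : nat_of_ord o = j := Eo. have := ltn_ord o. lia.
Qed.

Lemma zn_ord (z : 'cV[R[i]]_d) (j : 'I_d) : zn z j = z j ord0.
Proof. by rewrite /zn valK. Qed.

Lemma Az_ent mm (z : 'cV_d) (i : 'I_d) :
  (Amx d w mm k c *m z) i ord0 = \sum_(j < d) Aent d w mm k c i j * zn z j.
Proof. by rewrite mxE; apply: eq_bigr => j _; rewrite /Aent /zn !valK. Qed.

Lemma key (hp : (1 <= p)%N) (hps : (p < s)%N) (hsd : (s <= d)%N)
  (nd : chain_nondeg d w m k c p s) (z : 'cV[R[i]]_d) (g : R[i]) :
  Amx d w m k c *m z = g *: B_a R d p -> zn z s.-1 = 0 -> z = 0.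
Proof.
move=> hA hz.
have row i : (i < d)%N -> \sum_(j < d) Aent d w m k c i j * zn z j = g * (i == p.-1)%:R.
  move=> hi; move/matrixP: hA => /(_ (Ordinal hi) ord0).
  by rewrite Az_ent !mxE.
case: nd => uR uV ass ga.
have ZV j : (s <= j)%N -> zn z j = 0.
  move=> hj; case: (ltnP j d) => hjd; last by rewrite zn_out.
  have hsd' : (s < d)%N by lia.
  pose zV : 'cV_(d - s) := \col_q zn z (s + q).
  have eV : A_V d w m k c s *m zV = 0.
    apply/matrixP => r j0; rewrite ord1 !mxE.
    have hr : (s + r < d)%N by have := ltn_ord r; lia.
    have := row _ hr.
    rewrite (_ : (s + r == p.-1) = false); last by apply/negbTE/eqP; lia.
    rewrite mulr0 => hh; rewrite -[RHS]hh.
    rewrite -(big_mkord xpredT (fun j => Aent d w m k c (s+r) j * zn z j)).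
    rewrite (big_cat_nat _ (n:=s)) //=.
    rewrite [X in _ = X + _]big1_seq ?add0r; last first.
      move=> jj /andP[_]; rewrite mem_index_iota => /andP[_ hj2].
      case: (ltnP jj s.-1) => hj3; first by rewrite Aent_far ?mul0r //; lia.
      have -> : jj = s.-1 by lia.
      by rewrite hz mulr0.
    rewrite (big_addn 0 d s) big_mkord.
    by apply: eq_bigr => q _; rewrite !mxE (addnC q).
  have h0 := mulKmx (uV hsd') zV; rewrite eV mulmx0 in h0.
  have hq : (j - s < d - s)%N by lia.
  move/matrixP: h0 => /(_ (Ordinal hq) ord0); rewrite !mxE /=.
  by rewrite subnKC.
have hs2 : (s.-2 < d)%N by lia.
have hs1 : (s.-1 < d)%N by lia.
have e0 := row _ hs1.
rewrite (_ : (s.-1 == p.-1) = false) ?mulr0 in e0; last by apply/negbTE/eqP; lia.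
rewrite (bigD1 (Ordinal hs2)) //= big1 ?addr0 in e0; last first.
  move=> j hj.
  have hj' : (nat_of_ord j != s.-2) by apply: contra hj => /eqP e; apply/eqP/val_inj.
  move/eqP in hj'.
  case: (ltnP j s.-2) => ?; first by rewrite Aent_far ?mul0r //; lia.
  case: (ltnP j s) => ?; last by rewrite ZV ?mulr0.
  have -> : nat_of_ord j = s.-1 by lia.
  by rewrite hz mulr0.
pose zR : 'cV_(s.-1) := \col_q zn z q.
have eR : A_R d w m k c s *m zR = g *: D_a R p s.
  apply/matrixP => r j0; rewrite ord1 !mxE.
  have hr : (r < d)%N by have := ltn_ord r; lia.
  rewrite -(row _ hr).
  rewrite -(big_mkord xpredT (fun j => Aent d w m k c r j * zn z j)).
  rewrite (big_cat_nat _ (n:=s.-1)) //=; last lia.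
  rewrite [X in _ = _ + X]big1_seq ?addr0; last first.
    move=> j /andP[_]; rewrite mem_index_iota => /andP[hj1 hj2].
    case: (ltnP s.-1 j) => hj3; last first.
      have -> : j = s.-1 by lia.
      by rewrite hz mulr0.
    by rewrite Aent_far ?mul0r //; have := ltn_ord r; lia.
  by rewrite big_mkord; apply: eq_bigr => q _; rewrite !mxE.
have hzR : zR = g *: (invmx (A_R d w m k c s) *m D_a R p s).
  by rewrite scalemxAr -eR mulKmx.
have hR : (s.-2 < s.-1)%N by lia.
have : (((a_R w k c s)^T) *m zR) ord0 ord0 = 0.
  rewrite mxE (bigD1 (Ordinal hR)) //= big1 ?addr0.
    have hs22 : (2 <= s)%N by lia. by rewrite mxE (aR_ent hs22 hsd hR) mxE.
  move=> j hj.
  have hj' : (nat_of_ord j != s.-2) by apply: contra hj => /eqP e; apply/eqP/val_inj.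
  by rewrite !mxE (negbTE hj') mul0r.
rewrite hzR -scalemxAr mxE mulmxA => /eqP; rewrite mulf_eq0 (negbTE ga) orbF => /eqP g0.
rewrite g0 scale0r in hzR.
apply/matrixP => i j; rewrite ord1 mxE -zn_ord.
case: (ltnP i s.-1) => hi.
  by move/matrixP: hzR => /(_ (Ordinal hi) ord0); rewrite !mxE.
case: (ltnP i s) => ?; last by rewrite ZV.
have -> : nat_of_ord i = s.-1 by lia.
by rewrite hz.
Qed.

Lemma Amx_swap (m' : nat -> R) (hs : (1 <= s)%N) (hm : forall i : nat, i != s -> m' i = m i)
  (z : 'cV[R[i]]_d) : zn z s.-1 = 0 -> Amx d w m' k c *m z = Amx d w m k c *m z.
Proof.
move=> hz; apply/matrixP => i j0. rewrite ord1 (Az_ent m') (Az_ent m); apply: eq_bigr => j _.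
case: (eqVneq (nat_of_ord j) s.-1) => e.
  have e' : zn z j = 0 by rewrite e.
  by rewrite e' mulr0 mulr0.
have -> : Aent d w m' k c i j = Aent d w m k c i j; last reflexivity.
rewrite /Aent !valK /Amx /Mmx !mxE.
case: eqVneq => e2; last reflexivity.
have e3 : nat_of_ord i = nat_of_ord j by rewrite e2.
rewrite hm; first reflexivity.
apply/eqP; lia.
Qed.
End S.
Arguments zn {R d}.
Arguments key {R d w m k c p s}.
Arguments Amx_swap {R d w m k c s}.

Lemma cmodE (R : rcfType) (z : R[i]) : cmod z = Normc.normc z.
Proof. by case: z. Qed.

Lemma xphZ (R : rcfType) d (t : R[i]) (x : 'cV[R[i]]_d) n : xph (t *: x) n = t * xph x n.
Proof.
rewrite /xph; case: n => [|n]; first by rewrite mulr0.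
by case: insub => [o|]; rewrite ?mxE ?mulr0.
Qed.

Lemma znB (R : rcfType) d (t : R[i]) (x y : 'cV[R[i]]_d) n : zn (t *: x - y) n = t * zn x n - zn y n.
Proof. by rewrite /zn; case: insub => [o|]; rewrite ?mxE ?mulr0 ?subr0. Qed.

Theorem theorem1 (R : rcfType) (d p s : nat) (w : R) (m m' k c : nat -> R)
    (fd fa fd' fa' : R[i]) (x x' : 'cV[R[i]]_d) :
  (2 <= d)%N -> (1 <= p)%N -> (p < s)%N -> (s <= d)%N -> 0 < w ->
  (forall i, (1 <= i <= d)%N -> 0 < m i) ->
  (forall i, (1 <= i <= d)%N -> 0 < m' i) ->
  (forall i, (1 <= i <= d.+1)%N -> 0 < k i /\ 0 <= c i) ->
  (forall i, i != s -> m' i = m i) ->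
  chain_nondeg d w m k c p s ->
  chain_nondeg d w m' k c p s ->
  Amx d w m k c *m x = fd *: B_d R d + fa *: B_a R d p ->
  xph x s = 0 ->
  Amx d w m' k c *m x' = fd' *: B_d R d + fa' *: B_a R d p ->
  xph x' s = 0 ->
  cmod fd = cmod fd' ->
  forall i, (1 <= i <= d.+1)%N -> Wmax k x i = Wmax k x' i.
Proof.
move=> hd hp hps hsd hw _ _ _ hm nd _ hx hxs hx' hx's hf i hi.
have zs : zn x s.-1 = 0 by have : xph x s.-1.+1 = 0 by rewrite prednK //; lia.
have zs' : zn x' s.-1 = 0 by have : xph x' s.-1.+1 = 0 by rewrite prednK //; lia.
rewrite (Amx_swap _ _ hm _ zs') in hx'; last by lia.
have [fd0|fdn] := eqVneq fd 0.
  have fd0' : fd' = 0.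
    by apply: Normc.eq0_normc; rewrite -cmodE -hf fd0 cmodE Normc.normc0.
  rewrite fd0 scale0r add0r in hx; rewrite fd0' scale0r add0r in hx'.
  have -> := key hp hps hsd nd _ _ hx zs.
  by have -> := key hp hps hsd nd _ _ hx' zs'.
pose t := fd' / fd.
have htd : t * fd = fd' by rewrite /t divfK.
have hz : Amx d w m k c *m (t *: x - x') = (t * fa - fa') *: B_a R d p.
  rewrite mulmxBr -scalemxAr hx hx' scalerDr !scalerA htd.
  by rewrite opprD addrACA subrr add0r scalerBl.
have hz0 : zn (t *: x - x') s.-1 = 0.
  rewrite znB zs zs' mulr0; exact: subrr.
have hz1 := key hp hps hsd nd _ _ hz hz0.
move/eqP: hz1; rewrite subr_eq0 => /eqP hxe.
rewrite -hxe.
rewrite /Wmax !xphZ -mulrBr !cmodE Normc.normcM.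
have -> : Normc.normc t = 1.
  have nf : Normc.normc fd != 0 by apply: contra fdn => /eqP /Normc.eq0_normc ->.
  by rewrite /t Normc.normcM Normc.normcV -!cmodE -hf divff // cmodE.
by rewrite (mul1r (Normc.normc (xph x i - xph x i.-1))).
Qed.
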